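(* Let $\Bbbk$ be a field, $\lambda=(\lambda_1,\ldots,\lambda_n)$ a partition with $\lambda_1\ge\cdots\ge\lambda_n\ge1$, $m=\lambda_1$, $S=\Bbbk[x_1,\ldots,x_n,y_1,\ldots,y_m]$ and $I_\lambda=(x_iy_j\mid 1\le i\le n,1\le j\le\lambda_i)$. Then $\operatorname{depth}S/I_\lambda^t=1$ for all $t\ge2$. *)

(* Defs.v *)
From mathcomp Require Import all_boot all_algebra.
From mathcomp Require Import mpoly.

Set Implicit Arguments.
Unset Strict Implicit.
Unset Printing Implicit Defensive.

Import GRing.Theory.
Local Open Scope ring_scope.

Section Ideals.
Variables (k : fieldType) (N : nat).
Local Notation R := {mpoly k[N]}.

Definition in_ideal (A : R -> Prop) (f : R) : Prop :=
  exists s : seq (R * R),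
    (forall p, p \in s -> A p.2) /\ f = \sum_(p <- s) p.1 * p.2.

Fixpoint pow_ideal (A : R -> Prop) (t : nat) : R -> Prop :=
  match t with
  | 0 => fun _ => True
  | t'.+1 => in_ideal (fun f => exists a b,
               pow_ideal A t' a /\ in_ideal A b /\ f = a * b)
  end.

Definition max_ideal : R -> Prop := in_ideal (fun h => exists i : 'I_N, h = 'X_i).

Definition ideal_add_seq (J : R -> Prop) (fs : seq R) : R -> Prop :=
  in_ideal (fun h => J h \/ h \in fs).

Definition regular_seq (J : R -> Prop) (fs : seq R) : Prop :=
  (forall i, (i < size fs)%N -> forall g : R,
      ideal_add_seq J (take i fs) (fs`_i * g) -> ideal_add_seq J (take i fs) g)
  /\ ~ ideal_add_seq J fs 1.

Definition depth_quot_eq (J : R -> Prop) (d : nat) : Prop :=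
  (exists fs : seq R, size fs = d /\ (forall f, f \in fs -> max_ideal f)
                      /\ regular_seq J fs)
  /\ ~ (exists fs : seq R, (d < size fs)%N /\ (forall f, f \in fs -> max_ideal f)
                      /\ regular_seq J fs).

End Ideals.

(** For a partition [lam] = (lam_1,...,lam_n), the ring
    S = k[x_1..x_n, y_1..y_m] with m = lam_1 is {mpoly k[n + m]},
    x_i = 'X_(lshift m i), y_j = 'X_(rshift n j). *)
Definition xvar (k : fieldType) (lam : seq nat) (i : 'I_(size lam))
  : {mpoly k[size lam + head 0%N lam]} := 'X_(lshift (head 0%N lam) i).
Definition yvar (k : fieldType) (lam : seq nat) (j : 'I_(head 0%N lam))
  : {mpoly k[size lam + head 0%N lam]} := 'X_(rshift (size lam) j).

Definition Ilam_gens (k : fieldType) (lam : seq nat)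
  (h : {mpoly k[size lam + head 0%N lam]}) : Prop :=
  exists (i : 'I_(size lam)) (j : 'I_(head 0%N lam)),
    (j < nth 0%N lam i)%N /\ h = @xvar k lam i * @yvar k lam j.

(* Main.v *)
Require Import Defs.
From mathcomp Require Import all_boot all_algebra.
From mathcomp Require Import mpoly.
From mathcomp Require Import zify ring.

Set Implicit Arguments.
Unset Strict Implicit.
Unset Printing Implicit Defensive.
Import GRing.Theory.

Local Open Scope ring_scope.

Section Gen.
Variables (k : fieldType) (N : nat).
Local Notation S := {mpoly k[N]}.
Implicit Types (A B : S -> Prop) (p q r : S).

Lemma in_ideal0 A : in_ideal A 0.
Proof. by exists [::]; split => //; rewrite big_nil. Qed.

Lemma in_idealD A p q : in_ideal A p -> in_ideal A q -> in_ideal A (p + q).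
Proof.
move=> [s [hs ->]] [s' [hs' ->]]; exists (s ++ s'); split; last by rewrite big_cat.
by move=> x; rewrite mem_cat => /orP [/hs|/hs'].
Qed.

Lemma in_idealM A r p : in_ideal A p -> in_ideal A (r * p).
Proof.
move=> [s [hs ->]]; exists [seq (r * x.1, x.2) | x <- s]; split.
  by move=> x /mapP [y /hs hy ->].
by rewrite big_map mulr_sumr; apply: eq_bigr => x _; rewrite mulrA.
Qed.

Lemma in_idealN A p : in_ideal A p -> in_ideal A (- p).
Proof. by move=> h; rewrite -mulN1r; apply: in_idealM. Qed.

Lemma in_idealB A p q : in_ideal A p -> in_ideal A q -> in_ideal A (p - q).
Proof. by move=> hp hq; apply: in_idealD => //; apply: in_idealN. Qed.

Lemma in_ideal_gen A a : A a -> in_ideal A a.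
Proof.
by move=> h; exists [:: (1, a)]; split; [move=> x; rewrite inE => /eqP -> | rewrite big_seq1 mul1r].
Qed.

Lemma in_ideal_sum A (I : Type) (r : seq I) (F : I -> S) :
  (forall i, in_ideal A (F i)) -> in_ideal A (\sum_(i <- r) F i).
Proof.
move=> h; elim: r => [|x r IH]; first by rewrite big_nil; apply: in_ideal0.
by rewrite big_cons; apply: in_idealD.
Qed.

Lemma in_ideal_trans A B p :
  (forall a, A a -> in_ideal B a) -> in_ideal A p -> in_ideal B p.
Proof.
move=> hAB [s [hs ->]]; elim: s hs => [|x s IH] hs; first by rewrite big_nil; apply: in_ideal0.
rewrite big_cons; apply: in_idealD; last by apply: IH => y hy; apply: hs; rewrite inE hy orbT.
by apply: in_idealM; apply: hAB; apply: hs; rewrite inE eqxx.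
Qed.

Definition allsupp (Q : pred 'X_{1..N}) p := forall m, m \in msupp p -> Q m.

Definition upclosed (Q : pred 'X_{1..N}) := forall m m', Q m -> Q (m + m')%MM.

Lemma allsupp0 Q : allsupp Q 0.
Proof. by move=> m; rewrite msupp0. Qed.

Lemma allsuppD Q p q : allsupp Q p -> allsupp Q q -> allsupp Q (p + q).
Proof. by move=> hp hq m /msuppD_le; rewrite mem_cat => /orP [/hp|/hq]. Qed.

Lemma allsupp_prod (Q1 Q2 Q3 : pred 'X_{1..N}) p q :
  (forall m1 m2, Q1 m1 -> Q2 m2 -> Q3 (m1 + m2)%MM) ->
  allsupp Q1 p -> allsupp Q2 q -> allsupp Q3 (p * q).
Proof.
move=> h hp hq m /msuppM_le /allpairsP [[m1 m2] /= [h1 h2 ->]].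
by apply: h; [apply: hp | apply: hq].
Qed.

Lemma allsuppM Q r p : upclosed Q -> allsupp Q p -> allsupp Q (r * p).
Proof.
move=> hQ hp; apply: (allsupp_prod (Q1 := predT) (Q2 := Q)) => //.
by move=> m1 m2 _ h2; rewrite addmC; apply: hQ.
Qed.

Lemma in_ideal_allsupp Q A p : upclosed Q ->
  (forall a, A a -> allsupp Q a) -> in_ideal A p -> allsupp Q p.
Proof.
move=> hQ hA [s [hs ->]]; elim: s hs => [|x s IH] hs; first by rewrite big_nil; apply: allsupp0.
rewrite big_cons; apply: allsuppD; last by apply: IH => y hy; apply: hs; rewrite inE hy orbT.
by apply: allsuppM => //; apply: hA; apply: hs; rewrite inE eqxx.
Qed.

Lemma allsuppN Q p : allsupp Q p -> allsupp Q (- p).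
Proof. by move=> h m; rewrite (perm_mem (msuppN p)); apply: h. Qed.

Lemma max_ideal_decomp f : max_ideal f ->
  exists c : 'I_N -> S, f = \sum_(v < N) c v * 'X_v.
Proof.
move=> [s [hs ->]]; elim: s hs => [|x s IH] hs.
  by exists (fun _ => 0); rewrite big_nil big1 // => v _; rewrite mul0r.
have [c hc] : exists c : 'I_N -> S, \sum_(p <- s) p.1 * p.2 = \sum_(v < N) c v * 'X_v.
  by apply: IH => y hy; apply: hs; rewrite inE hy orbT.
have [i hi] := hs x (mem_head _ _).
exists (fun v => c v + (if v == i then x.1 else 0)).
rewrite big_cons hc hi.
under [RHS]eq_bigr do rewrite mulrDl.
rewrite big_split /= addrC; congr (_ + _).
rewrite (bigD1 i) //= eqxx big1 ?addr0 // => v /negbTE ->; by rewrite mul0r.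
Qed.

End Gen.

Section Greedy.
Local Open Scope nat_scope.

Lemma sum_pos_ex (b : nat -> nat) l : 0 < \sum_(0 <= j < l) b j -> exists2 j, j < l & 0 < b j.
Proof.
elim: l => [|l IH]; first by rewrite big_geq.
rewrite big_nat_recr //= addn_gt0 => /orP [/IH [j hj hb]|hb].
  by exists j => //; apply: ltnW.
by exists l.
Qed.

Lemma sum_nat_mono (b : nat -> nat) l l' : l <= l' ->
  \sum_(0 <= j < l) b j <= \sum_(0 <= j < l') b j.
Proof. by move=> h; rewrite (big_cat_nat (leq0n l) h) /= leq_addr. Qed.

Lemma leq0_eq x : x <= 0 -> x == 0. Proof. by rewrite leqn0. Qed.

Lemma greedy (al be lf : nat -> nat) (n t : nat) :
  (forall i, n <= i -> al i = 0) -> lf n = 0 ->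
  (forall a b, a <= b -> lf b <= lf a) ->
  (forall k, k <= n -> t.+1 <= \sum_(0 <= i < k) al i + \sum_(0 <= j < lf k) be j) ->
  exists i j, [/\ i < n, j < lf i, 0 < al i, 0 < be j &
   forall k, k <= n -> t + ((i < k) + (j < lf k)) <=
        \sum_(0 <= i' < k) al i' + \sum_(0 <= j' < lf k) be j'].
Proof.
move=> hal hlf hmono hL.
pose B l := \sum_(0 <= j < l) be j.
have [i /andP [/andP [hin hai] hBi]] : exists i, (i < n) && (0 < al i) && (0 < B (lf i)).
  case: (boolP [exists i : 'I_n, (0 < al i) && (0 < B (lf i))]).
    by move=> /existsP [i hi]; exists i; rewrite ltn_ord.
  move=> /existsPn hno; exfalso.
  have exk : exists k, B (lf k) == 0 by exists n; rewrite hlf /B big_geq.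
  case: (ex_minnP exk) => k0 /eqP hk0 hmin.
  have k0n : k0 <= n by apply: hmin; rewrite hlf /B big_geq.
  have := hL k0 k0n; rewrite -/(B (lf k0)) hk0 addn0.
  rewrite big_nat big1 // => i /andP [_ hik].
  case: (ltnP i n) => [hin|]; last by apply: hal.
  have := hno (Ordinal hin); rewrite /= negb_and -!leqNgt leqn0 => /orP [/eqP //|hB].
  by have := hmin i (leq0_eq hB); rewrite leqNgt hik.
have exj : exists j, (j < lf i) && (0 < be j).
  by have [j hj hb] := sum_pos_ex hBi; exists j; rewrite hj hb.
have bnd : forall j, (j < lf i) && (0 < be j) -> j <= lf i.
  by move=> j /andP [/ltnW]. 
case: (ex_maxnP exj bnd) => j /andP [hj hbj] hmax.
exists i, j; split => // k hk.
have hLk := hL k hk.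
case: (ltnP i k) => hik; last by rewrite add0n; case: (j < lf k); lia.
case: (ltnP j (lf k)) => hjk; last by rewrite addn0; lia.
have hlk : lf k <= lf i by apply: hmono; apply: ltnW.
have eqB : B (lf i) = B (lf k).
  rewrite /B (big_cat_nat (leq0n (lf k)) hlk) /=.
  suff -> : \sum_(lf k <= j' < lf i) be j' = 0 by rewrite addn0.
  rewrite big_nat big1 // => j' /andP [h1 h2].
  apply/eqP; rewrite -leqn0 leqNgt; apply/negP => hb.
  have := hmax j'; rewrite h2 hb => /(_ isT); lia.
have hLi := hL i (ltnW hin).
have : \sum_(0 <= i' < i.+1) al i' <= \sum_(0 <= i' < k) al i' by apply: sum_nat_mono.
rewrite big_nat_recr //= => hs.
rewrite -/(B (lf k)) -eqB; rewrite -/(B (lf i)) in hLi.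
lia.
Qed.
End Greedy.


Section Lam.
Variables (lam : seq nat).
Local Notation n := (size lam).
Local Notation mm := (head 0%N lam).
Local Open Scope nat_scope.

Definition ax (mu : 'X_{1..n + mm}) (i : nat) : nat :=
  oapp (fun i' : 'I_n => mu (lshift mm i')) 0 (insub i).
Definition ay (mu : 'X_{1..n + mm}) (j : nat) : nat :=
  oapp (fun j' : 'I_mm => mu (rshift n j')) 0 (insub j).
Definition lf (k : nat) := nth 0 lam k.
Definition L mu k := \sum_(0 <= i < k) ax mu i + \sum_(0 <= j < lf k) ay mu j.
Definition Cb t mu := [forall kk : 'I_n.+1, t <= L mu kk].

Lemma axE mu (i : 'I_n) : ax mu i = mu (lshift mm i).
Proof. by rewrite /ax valK. Qed.
Lemma ayE mu (j : 'I_mm) : ay mu j = mu (rshift n j).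
Proof. by rewrite /ay valK. Qed.
Lemma ax_out mu i : n <= i -> ax mu i = 0.
Proof. by move=> h; rewrite /ax insubF // ltnNge h. Qed.
Lemma ay_out mu j : mm <= j -> ay mu j = 0.
Proof. by move=> h; rewrite /ay insubF // ltnNge h. Qed.

Lemma axD mu1 mu2 i : ax (mu1 + mu2)%MM i = ax mu1 i + ax mu2 i.
Proof. by rewrite /ax; case: insubP => [i' _ _|_] /=; rewrite ?mnmDE. Qed.
Lemma ayD mu1 mu2 i : ay (mu1 + mu2)%MM i = ay mu1 i + ay mu2 i.
Proof. by rewrite /ay; case: insubP => [i' _ _|_] /=; rewrite ?mnmDE. Qed.

Lemma LD mu1 mu2 k : L (mu1 + mu2)%MM k = L mu1 k + L mu2 k.
Proof.
rewrite /L; under eq_bigr do rewrite axD; under [X in _ + X]eq_bigr do rewrite ayD.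
rewrite !big_split /=; lia.
Qed.

Lemma L0 k : L 0%MM k = 0.
Proof.
rewrite /L !big1 // => i _; [rewrite /ay | rewrite /ax]; by case: insubP => //= *; rewrite mnm0E.
Qed.

Lemma LMn mu r k : L (mu *+ r)%MM k = L mu k * r.
Proof.
elim: r => [|r IH]; first by rewrite mulm0n L0 muln0.
by rewrite mulmS LD IH mulnS.
Qed.

Lemma sum_ind i0 k : \sum_(0 <= i < k) (i == i0) = (i0 < k).
Proof.
elim: k => [|k IH]; first by rewrite big_geq.
rewrite big_nat_recr //= IH ltnS.
by case: (ltngtP i0 k).
Qed.

Lemma lr_neq (i : 'I_n) (j : 'I_mm) : (lshift mm i == rshift n j) = false.
Proof. by apply/negbTE; rewrite -val_eqE /=; rewrite neq_ltn (leq_trans (ltn_ord i)) ?leq_addr. Qed.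

Lemma ax_Ux (i0 : 'I_n) i : ax (U_(lshift mm i0))%MM i = (i == i0).
Proof.
rewrite /ax; case: insubP => [i' _ hi|] /=; last first.
  by move=> h; case: eqP => // hh; rewrite hh ltn_ord in h.
by rewrite mnm1E (inj_eq (@lshift_inj _ _)) eq_sym -val_eqE /= hi.
Qed.
Lemma ay_Ux (i0 : 'I_n) j : ay (U_(lshift mm i0))%MM j = 0.
Proof. by rewrite /ay; case: insubP => [j' _ _|] //=; rewrite mnm1E lr_neq. Qed.
Lemma ax_Uy (j0 : 'I_mm) i : ax (U_(rshift n j0))%MM i = 0.
Proof. by rewrite /ax; case: insubP => [j' _ _|] //=; rewrite mnm1E eq_sym lr_neq. Qed.
Lemma ay_Uy (j0 : 'I_mm) j : ay (U_(rshift n j0))%MM j = (j == j0).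
Proof.
rewrite /ay; case: insubP => [j' _ hj|] /=; last first.
  by move=> h; case: eqP => // hh; rewrite hh ltn_ord in h.
by rewrite mnm1E (inj_eq (@rshift_inj _ _)) eq_sym -val_eqE /= hj.
Qed.

Lemma L_Ux (i0 : 'I_n) k : L (U_(lshift mm i0))%MM k = (i0 < k).
Proof.
rewrite /L; under eq_bigr do rewrite ax_Ux; under [X in _ + X]eq_bigr do rewrite ay_Ux.
by rewrite sum_ind big1 ?addn0.
Qed.
Lemma L_Uy (j0 : 'I_mm) k : L (U_(rshift n j0))%MM k = (j0 < lf k).
Proof.
rewrite /L; under eq_bigr do rewrite ax_Uy; under [X in _ + X]eq_bigr do rewrite ay_Uy.
by rewrite sum_ind big1.
Qed.

Lemma CbP t mu : reflect (forall k, k <= n -> t <= L mu k) (Cb t mu).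
Proof.
apply: (iffP forallP) => [h k hk|h kk]; last by apply: h; rewrite -ltnS ltn_ord.
by have := h (Ordinal (hk : k < n.+1)).
Qed.

Lemma Cb_up t : forall mu mu', Cb t mu -> Cb t (mu + mu')%MM.
Proof.
move=> mu mu' /CbP h; apply/CbP => k hk; rewrite LD; apply: leq_trans (h k hk) _; apply: leq_addr.
Qed.

Lemma Cb_add t1 t2 mu1 mu2 : Cb t1 mu1 -> Cb t2 mu2 -> Cb (t1 + t2) (mu1 + mu2)%MM.
Proof.
move=> /CbP h1 /CbP h2; apply/CbP => k hk; rewrite LD; apply: leq_add; [exact: h1|exact: h2].
Qed.

Lemma Cb0 mu : Cb 0 mu.
Proof. by apply/CbP. Qed.

Lemma lf_n : lf n = 0.
Proof. by rewrite /lf nth_default. Qed.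
Lemma lf_0 : lf 0 = mm.
Proof. by rewrite /lf nth0. Qed.

Hypothesis hpart : sorted geq lam.
Hypothesis hpos : all (fun a => 0 < a) lam.

Lemma lf_mono a b : a <= b -> lf b <= lf a.
Proof.
move=> hab; case: (ltnP b n) => hb; last by rewrite /lf (nth_default _ hb).
have ha : a \in [pred x | x < n] by rewrite inE (leq_ltn_trans hab hb).
have hb' : b \in [pred x | x < n] by rewrite inE.
have tr : transitive geq by move=> x y z /= h1 h2; apply: leq_trans h2 h1.
have rf : reflexive geq by move=> x /=.
have := sorted_leq_nth tr rf 0 hpart a b ha hb' hab. rewrite /lf /=. by [].
Qed.

Lemma lf_pos k : k < n -> 0 < lf k.
Proof. by move=> h; rewrite /lf; apply: (all_nthP 0 hpos). Qed.

Lemma Cb_edge (i : 'I_n) (j : 'I_mm) : j < lf i -> Cb 1 (U_(lshift mm i) + U_(rshift n j))%MM.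
Proof.
move=> hj; apply/CbP => k hk; rewrite LD L_Ux L_Uy.
case: (ltnP i k) => // hik; rewrite add0n lt0b.
by apply: leq_trans hj (lf_mono hik).
Qed.

End Lam.

Local Open Scope ring_scope.

Section Poly.
Variables (k : fieldType) (lam : seq nat).
Local Notation n := (size lam).
Local Notation mm := (head 0%N lam).
Local Notation S := {mpoly k[n + mm]}.
Local Notation Ilam := (@Ilam_gens k lam).
Local Notation Cbt := (@Cb lam).
Hypothesis hpart : sorted geq lam.
Hypothesis hpos : all (fun a => 0 < a)%N lam.

Lemma in_ideal_sum_seq (A : S -> Prop) (I : eqType) (r : seq I) (F : I -> S) :
  (forall i, i \in r -> in_ideal A (F i)) -> in_ideal A (\sum_(i <- r) F i).
Proof.
elim: r => [|x r IH] h; first by rewrite big_nil; apply: in_ideal0.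
rewrite big_cons; apply: in_idealD; first by apply: h; rewrite mem_head.
by apply: IH => i hi; apply: h; rewrite inE hi orbT.
Qed.

Lemma edge_monoE (i : 'I_n) (j : 'I_mm) :
  @xvar k lam i * @yvar k lam j = 'X_[U_(lshift mm i) + U_(rshift n j)].
Proof. by rewrite mpolyXD. Qed.

Lemma T1 t (p : S) : pow_ideal Ilam t p -> allsupp (Cbt t) p.
Proof.
elim: t p => [|t IH] p /=; first by move=> _ m _; apply: Cb0.
apply: in_ideal_allsupp; first by move=> m m'; apply: Cb_up.
move=> f [a [b [ha [hb ->]]]].
apply: (allsupp_prod (Q1 := Cbt t) (Q2 := Cbt 1)); last 2 first.
- exact: IH.
- apply: (in_ideal_allsupp _ _ hb); first by move=> m m'; apply: Cb_up.
  move=> h [i [j [hij ->]]]; rewrite edge_monoE => m; rewrite msuppX inE => /eqP ->.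
  exact: Cb_edge hpart _ _ hij.
by move=> m1 m2 h1 h2; rewrite -addn1; apply: Cb_add.
Qed.

Lemma T2 t mu : Cbt t mu -> pow_ideal Ilam t 'X_[mu].
Proof.
elim: t mu => [|t IH] mu //= hC.
have [i [j [hi hj hai haj hb]]] := greedy (@ax_out lam mu) (lf_n lam) (lf_mono hpart) (CbP _ _ hC).
have hjm : (j < mm)%N by apply: (leq_trans hj); rewrite -(lf_0 lam); apply: lf_mono.
pose io := Ordinal hi; pose jo := Ordinal hjm.
pose e := (U_(lshift mm io) + U_(rshift n jo))%MM.
have hle : (e <= mu)%MM.
  apply/mnm_lepP => v; rewrite mnmDE !mnm1E.
  case: (eqVneq (lshift mm io) v) => [<-|h1].
    rewrite eq_sym lr_neq addn0; have := hai; rewrite -[i]/(val io) axE; by case: (mu _).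
  case: (eqVneq (rshift n jo) v) => [<-|h2] //.
  by have := haj; rewrite -[j]/(val jo) ayE.
have hC' : Cbt t (mu - e)%MM.
  apply/CbP => kk hk; have := hb kk hk.
  have E : L mu kk = (L (mu - e) kk + L e kk)%N by rewrite -LD submK.
  rewrite -/(L mu kk) E /e LD L_Ux L_Uy /=; lia.
rewrite -(submK hle) mpolyXD.
apply: in_ideal_gen; exists 'X_[mu - e], 'X_[e]; split; first exact: IH.
split => //; apply: in_ideal_gen; exists io, jo; split => //.
by rewrite edge_monoE.
Qed.

Lemma T3 t (p : S) : allsupp (Cbt t.+1) p -> pow_ideal Ilam t.+1 p.
Proof.
move=> h; rewrite (mpolyE p); apply: in_ideal_sum_seq => m hm.
rewrite -mul_mpolyC; apply: in_idealM; exact: (T2 (h m hm)).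
Qed.

End Poly.

Local Open Scope ring_scope.

Lemma argmax_seq (T : eqType) (s : seq T) (f : T -> nat) x0 :
  x0 \in s -> exists2 x, x \in s & forall y, y \in s -> (f y <= f x)%N.
Proof.
elim: s x0 => [|a s IH] //= x0 _.
case: s IH => [|b s] IH.
  by exists a => [|y]; rewrite ?mem_head // inE => /eqP ->.
have [x hx hmax] := IH b (mem_head _ _).
case: (leqP (f a) (f x)) => h.
  exists x; first by rewrite inE hx orbT.
  by move=> y; rewrite inE => /orP [/eqP ->|/hmax].
exists a; first exact: mem_head.
move=> y; rewrite inE => /orP [/eqP ->//|/hmax hy]; lia.
Qed.

Section Extreme.
Variables (k : fieldType) (N : nat).
Local Notation S := {mpoly k[N]}.

Lemma mcoefXM (v : 'I_N) (g : S) (m : 'X_{1..N}) : ('X_v * g)@_(U_(v) + m)%MM = g@_m.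
Proof. by rewrite mulrC mcoeffMX. Qed.

Lemma mcoefXM0 (v : 'I_N) (g : S) (m : 'X_{1..N}) : m v = 0%N -> ('X_v * g)@_m = 0.
Proof.
move=> hm; apply/eqP; rewrite mcoeff_eq0; apply/negP; rewrite mulrC (perm_mem (msuppMX _ _)).
by move=> /mapP [m' _ hE]; move: hm; rewrite hE mnmDE mnm1E eqxx.
Qed.

Lemma extreme (P Q : 'I_N) (good : pred 'X_{1..N}) (g : S) (nu : 'X_{1..N}) :
  P != Q -> upclosed good -> allsupp good (('X_P - 'X_Q) * g) ->
  nu \in msupp g -> ~~ good nu ->
  (forall nu', nu' \in msupp g -> ~~ good nu' -> nu' P = (nu P).+1 -> (nu' Q).+1 = nu Q ->
     (forall v, v != P -> v != Q -> nu' v = nu v) -> False) ->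
  good (nu + U_(P))%MM.
Proof.
move=> hPQ hup hfg hnu hbad hmax.
have hsupp : forall c, ((('X_P - 'X_Q) * g)@_(nu + U_(P)) = g@_nu - c) -> c = 0 -> good (nu + U_(P))%MM.
  move=> c hc hc0; apply: hfg; rewrite mcoeff_msupp hc hc0 subr0 -mcoeff_msupp //.
have hXP : ('X_P * g)@_(nu + U_(P))%MM = g@_nu by rewrite addmC mcoefXM.
case hQ: (nu Q) => [|q].
  apply: (hsupp (('X_Q * g)@_(nu + U_(P))%MM)); first by rewrite mulrBl mcoeffB hXP.
  by apply: mcoefXM0; rewrite mnmDE mnm1E hQ; case: eqP => // hh; rewrite hh eqxx in hPQ.
pose nu' := (nu + U_(P) - U_(Q))%MM.
have hle : (U_(Q) <= nu + U_(P))%MM by rewrite lep1mP mnmDE hQ.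
have hE : (nu + U_(P))%MM = (U_(Q) + nu')%MM by rewrite /nu' [RHS]addmC submK.
case: (boolP (nu' \in msupp g)) => hin.
  case: (boolP (good nu')) => hg.
    by rewrite hE addmC; apply: hup.
  exfalso; apply: (hmax nu' hin hg).
  - by rewrite /nu' mnmBE mnmDE !mnm1E eqxx eq_sym (negbTE hPQ) subn0 addn1.
  - by rewrite /nu' mnmBE mnmDE !mnm1E eqxx (negbTE hPQ) hQ addn0 subn1.
  - by move=> v h1 h2; rewrite /nu' mnmBE mnmDE !mnm1E eq_sym (negbTE h1) eq_sym (negbTE h2) addn0 subn0.
apply: (hsupp (('X_Q * g)@_(nu + U_(P))%MM)); first by rewrite mulrBl mcoeffB hXP.
by rewrite hE mcoefXM; apply/eqP; rewrite mcoeff_eq0.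
Qed.

End Extreme.

Section NZD.
Variables (k : fieldType) (lam : seq nat).
Local Notation n := (size lam).
Local Notation mm := (head 0%N lam).
Local Notation S := {mpoly k[n + mm]}.
Local Notation Ilam := (@Ilam_gens k lam).
Local Notation Cbt := (@Cb lam).
Hypothesis hn : (0 < n)%N.
Hypothesis hpart : sorted geq lam.
Hypothesis hpos : all (fun a => 0 < a)%N lam.

Lemma hmm0 : (0 < mm)%N.
Proof. by rewrite -(lf_0 lam); apply: lf_pos. Qed.

Definition xo : 'I_n := Ordinal (eq_ind_r is_true hn (ltn_predL n)).
Definition yo : 'I_mm := Ordinal (eq_ind_r is_true hmm0 (ltn_predL mm)).
Definition Xv := lshift mm xo.
Definition Yv := rshift n yo.
Definition fX : S := 'X_Xv - 'X_Yv.

Lemma XYneq : Xv != Yv.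
Proof. by rewrite /Xv /Yv lr_neq. Qed.

Lemma nzd t (g : S) : pow_ideal Ilam t.+1 (fX * g) -> pow_ideal Ilam t.+1 g.
Proof.
move=> hfg; apply: (T3 hpart hpos).
set good := Cbt t.+1.
have hfg' : allsupp good (fX * g) by exact: (T1 hpart hfg).
have hup : upclosed good by move=> m m'; apply: Cb_up.
move=> mu hmu; apply/negPn/negP => hbad.
pose same (nu : 'X_{1..n + mm}) := [forall v, ((v != Xv) && (v != Yv)) ==> (nu v == mu v)]
   && (nu Xv + nu Yv == mu Xv + mu Yv)%N.
pose cls := [seq nu <- msupp g | ~~ good nu && same nu].
have clsP : forall nu, nu \in cls <-> [/\ nu \in msupp g, ~~ good nu,
    (forall v, v != Xv -> v != Yv -> nu v = mu v) & (nu Xv + nu Yv = mu Xv + mu Yv)%N].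
  move=> nu; rewrite mem_filter; split.
    move=> /andP [/andP [hb /andP [/forallP hs /eqP hsum]] hin]; split => // v h1 h2.
    by apply/eqP; have := hs v; rewrite h1 h2.
  move=> [hin hb hs hsum]; rewrite hin hb andbT /same hsum eqxx andbT.
  by apply/forallP => v; apply/implyP => /andP [h1 h2]; rewrite hs.
have mucls : mu \in cls by apply/clsP; split.
have [n1 /clsP [h1s h1b h1o h1sum] hmax1] := argmax_seq (fun nu : 'X_{1..n + mm} => nu Xv) mucls.
have [n2 /clsP [h2s h2b h2o h2sum] hmax2] := argmax_seq (fun nu : 'X_{1..n + mm} => nu Yv) mucls.
have g1 : good (n1 + U_(Xv))%MM.
  apply: (extreme XYneq hup hfg' h1s h1b) => nu' hin hb hX hY ho.
  have : nu' \in cls.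
    apply/clsP; split => //.
      by move=> v hv1 hv2; rewrite ho // h1o.
    by rewrite -h1sum hX -hY addSnnS.
  by move=> /hmax1; rewrite hX ltnn.
have g2 : good (n2 + U_(Yv))%MM.
  have hYX : Yv != Xv by rewrite eq_sym XYneq.
  have hfg2 : allsupp good (('X_Yv - 'X_Xv) * g).
    by rewrite -opprB mulNr; apply: allsuppN.
  apply: (extreme hYX hup hfg2 h2s h2b) => nu' hin hb hY hX ho.
  have : nu' \in cls.
    apply/clsP; split => //.
      by move=> v hv1 hv2; rewrite ho // h2o.
    by rewrite -h2sum hY -hX addSnnS addnC addSnnS addnC.
  by move=> /hmax2; rewrite hY ltnn.
move: h1b; apply/negP/negPn/CbP => kk hk.
case: (ltnP kk n) => hkn.
  have := CbP _ _ g1 kk hk; rewrite LD /Xv L_Ux /=.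
  have -> : (n.-1 < kk)%N = false by apply/negbTE; rewrite -leqNgt; lia.
  by rewrite addn0.
have -> : kk = n by apply/eqP; rewrite eqn_leq hk hkn.
have := CbP _ _ g2 n (leqnn n); rewrite LD /Yv L_Uy (lf_n lam) addn0 => h.
apply: leq_trans h _.
rewrite /L (lf_n lam) [X in (_ <= _ + X)%N]big_geq // [X in (_ + X <= _)%N]big_geq // !addn0.
apply: leq_sum => i _.
rewrite /ax; case: (insub i) => [i'|] //=.
case: (eqVneq (lshift mm i') Xv) => [->|hne]; first by apply: hmax1; apply/clsP; split.
have hne2 : lshift mm i' != Yv by rewrite /Yv lr_neq.
by rewrite h2o // h1o.
Qed.

End NZD.

Local Open Scope ring_scope.

Section Ext.
Variables (k : fieldType) (N : nat).
Local Notation S := {mpoly k[N]}.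

Lemma add_nil (A : S -> Prop) h : ideal_add_seq (in_ideal A) [::] h -> in_ideal A h.
Proof.
apply: in_ideal_trans => a [//|]; by rewrite in_nil.
Qed.

Lemma add_nil' (A : S -> Prop) h : in_ideal A h -> ideal_add_seq (in_ideal A) [::] h.
Proof. by move=> hh; apply: in_ideal_gen; left. Qed.

Lemma add_one (A : S -> Prop) f h : ideal_add_seq (in_ideal A) [:: f] h ->
  exists r j, in_ideal A j /\ h = f * r + j.
Proof.
move=> [s [hs ->]]; elim: s hs => [|x s IH] hs.
  by exists 0, 0; split; [apply: in_ideal0 | rewrite big_nil mulr0 addr0].
rewrite big_cons.
have [r [j [hj ->]]] : exists r j, in_ideal A j /\ \sum_(p <- s) p.1 * p.2 = f * r + j.
  by apply: IH => y hy; apply: hs; rewrite inE hy orbT.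
case: (hs x (mem_head _ _)) => [hx|].
  exists r, (x.1 * x.2 + j); split; first by apply: in_idealD => //; apply: in_idealM.
  by rewrite addrCA.
rewrite inE => /eqP hx; exists (x.1 + r), j; split => //.
by rewrite hx mulrDr addrA mulrC.
Qed.

Lemma add_one' (A : S -> Prop) f r j : in_ideal A j -> ideal_add_seq (in_ideal A) [:: f] (f * r + j).
Proof.
move=> hj; apply: in_idealD; last by apply: in_ideal_gen; left.
by rewrite mulrC; apply: in_idealM; apply: in_ideal_gen; right; rewrite mem_head.
Qed.

Lemma ext1 (A : S -> Prop) (f1 f2 : S) (c d a : 'I_N -> S) :
  f1 = \sum_(v < N) c v * 'X_v -> f2 = \sum_(v < N) d v * 'X_v ->
  (forall v v', in_ideal A ('X_v' * a v - 'X_v * a v')) ->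
  (forall g, in_ideal A (f1 * g) -> in_ideal A g) ->
  (forall g, (exists r j, in_ideal A j /\ f2 * g = f1 * r + j) ->
      exists r j, in_ideal A j /\ g = f1 * r + j) ->
  exists w, forall u, in_ideal A (a u - 'X_u * w).
Proof.
move=> hf1 hf2 ha nzd1 nzd2.
pose F1 := \sum_(v < N) c v * a v.
pose F2 := \sum_(v < N) d v * a v.
pose D := \sum_(v < N) \sum_(v' < N) (d v * c v') * ('X_v * a v' - 'X_v' * a v).
have hD : in_ideal A D.
  by apply: in_ideal_sum => v; apply: in_ideal_sum => v'; apply: in_idealM; apply: ha.
have eq1 : f2 * F1 = f1 * F2 + D.
  rewrite hf1 hf2 /F1 /F2 /D !mulr_suml.
  under eq_bigr do rewrite mulr_sumr.
  under [X in _ = X + _]eq_bigr do rewrite mulr_sumr.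
  rewrite [X in _ = X + _]exchange_big /= -big_split /=.
  apply: eq_bigr => v _; rewrite -big_split /=; apply: eq_bigr => v' _; ring.
have [w [j1 [hj1 hF1]]] := nzd2 F1 (ex_intro _ F2 (ex_intro _ D (conj hD eq1))).
exists w => u; apply: nzd1.
pose E := \sum_(v < N) c v * ('X_v * a u - 'X_u * a v).
have hE : in_ideal A E by apply: in_ideal_sum => v; apply: in_idealM; apply: ha.
have eE : E = f1 * a u - 'X_u * F1.
  rewrite /E hf1 /F1 mulr_suml mulr_sumr -sumrB; apply: eq_bigr => v _; ring.
have -> : f1 * (a u - 'X_u * w) = E + 'X_u * j1.
  rewrite eE hF1; ring.
by apply: in_idealD => //; apply: in_idealM.
Qed.

End Ext.

Local Open Scope ring_scope.

Section Final.
Variables (k : fieldType) (lam : seq nat).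
Local Notation n := (size lam).
Local Notation mm := (head 0%N lam).
Local Notation S := {mpoly k[n + mm]}.
Local Notation Ilam := (@Ilam_gens k lam).
Local Notation Cbt := (@Cb lam).
Hypothesis hn : (0 < n)%N.
Hypothesis hpart : sorted geq lam.
Hypothesis hpos : all (fun a => 0 < a)%N lam.
Variable t' : nat.
Hypothesis ht : (1 <= t')%N.
Local Notation J := (pow_ideal Ilam t'.+1).

Lemma nz_up : upclosed (fun m : 'X_{1..n + mm} => m != 0%MM).
Proof. by move=> m m' h; rewrite mnmD_eq0 negb_and h. Qed.

Lemma Cb_nz m : Cbt t'.+1 m -> m != 0%MM.
Proof.
by move=> /CbP /(_ 0%N (leq0n _)); apply: contraL => /eqP ->; rewrite L0.
Qed.

Lemma J_nz p : J p -> allsupp (fun m : 'X_{1..n + mm} => m != 0%MM) p.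
Proof. by move=> /(T1 hpart) h m /h; apply: Cb_nz. Qed.

Lemma part1 : exists fs : seq S, size fs = 1%N /\ (forall f, f \in fs -> max_ideal f)
                      /\ regular_seq J fs.
Proof.
exists [:: fX k hn hpos]; split => //; split.
  move=> f; rewrite inE => /eqP ->.
  exists [:: (1, 'X_(Xv hn)); (-1, 'X_(Yv hn hpos))]; split.
    move=> p; rewrite !inE => /orP [/eqP ->|/eqP ->] /=; by [exists (Xv hn) | exists (Yv hn hpos)].
  by rewrite big_cons big_seq1 /= mul1r mulN1r.
split.
  move=> i; rewrite ltnS leqn0 => /eqP -> g /= /add_nil h.
  by apply: add_nil'; apply: (@nzd k lam hn hpart hpos t').
move=> h1.
have : allsupp (fun m : 'X_{1..n + mm} => m != 0%MM) (1 : S).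
  apply: (in_ideal_allsupp nz_up _ h1) => a [/J_nz //|].
  rewrite inE => /eqP -> m /msuppB_le; rewrite mem_cat !msuppX !inE.
  by move=> /orP [] /eqP ->; rewrite mnm1_eq0.
by move=> /(_ 0%MM); rewrite msupp1 mem_head => /(_ isT); rewrite eqxx.
Qed.

Definition x0 : 'I_n := Ordinal hn.
Definition y0 : 'I_mm := Ordinal (hmm0 hn hpos).
Definition c0 : 'X_{1..n + mm} := ((U_(lshift mm x0) + U_(rshift n y0)) *+ t')%MM.

Lemma Lc0 kk : L c0 kk = (((0 < kk)%N + (0 < lf lam kk)%N) * t')%N.
Proof. by rewrite /c0 LMn LD L_Ux L_Uy. Qed.

Definition aa (v : 'I_(n + mm)) : S :=
  match split v with inl _ => 0 | inr _ => 'X_v * 'X_[c0] end.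

Lemma key (i : 'I_n) (j : 'I_mm) : J ('X_(lshift mm i) * ('X_(rshift n j) * 'X_[c0])).
Proof.
rewrite -!mpolyXD; apply: (T3 hpart hpos) => m; rewrite msuppX inE => /eqP ->.
apply/CbP => kk hk; rewrite !LD L_Ux L_Uy Lc0.
case: kk hk => [|kk] hk.
  rewrite (lf_0 lam) ltn_ord (hmm0 hn hpos) /=; lia.
case: (ltnP kk.+1 n) => hkn.
  have := lf_pos hpos hkn; case: (lf lam kk.+1) => // l _ /=; lia.
have -> : (i < kk.+1)%N by apply: leq_trans (ltn_ord i) hkn.
lia.
Qed.

Lemma aa_ok v v' : J ('X_v' * aa v - 'X_v * aa v').
Proof.
rewrite /aa -(splitK v) -(splitK v') !unsplitK.
case: (split v) => [i|j]; case: (split v') => [i'|j'] /=.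
- by rewrite !mulr0 subr0; apply: in_ideal0.
- by rewrite mulr0 sub0r; apply: in_idealN; apply: key.
- by rewrite mulr0 subr0; apply: key.
- by rewrite mulrCA subrr; apply: in_ideal0.
Qed.

Lemma part2 : ~ (exists fs : seq S, (1 < size fs)%N /\ (forall f, f \in fs -> max_ideal f)
                      /\ regular_seq J fs).
Proof.
move=> [fs [hsz [hmax [hreg _]]]].
case: fs hsz hmax hreg => [|f1 [|f2 fs]] // _ hmax hreg.
have [c hc] := max_ideal_decomp (hmax f1 (mem_head _ _)).
have hf2 : f2 \in [:: f1, f2 & fs] by rewrite !inE eqxx orbT.
have [d hd] := max_ideal_decomp (hmax f2 hf2).
have nzd1 : forall g, J (f1 * g) -> J g.
  by move=> g hg; apply: add_nil; apply: (hreg 0%N isT g); apply: add_nil'.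
have nzd2 : forall g, (exists r j, J j /\ f2 * g = f1 * r + j) -> exists r j, J j /\ g = f1 * r + j.
  move=> g [r [j [hj he]]]; apply: add_one; apply: (hreg 1%N isT g) => /=.
  by rewrite he; apply: add_one'.
have [w hw] := ext1 hc hd aa_ok nzd1 nzd2.
have hx : J (- ('X_(lshift mm x0) * w)).
  by have := hw (unsplit (inl x0)); rewrite /aa unsplitK /= sub0r.
have hx' : allsupp (Cbt t'.+1) ('X_(lshift mm x0) * w).
  by rewrite -[_ * w]opprK; apply: allsuppN; apply: (T1 hpart hx).
case: (eqVneq (w@_c0) 0) => hwc.
  have hy : J ('X_(rshift n y0) * 'X_[c0] - 'X_(rshift n y0) * w).
    by have := hw (unsplit (inr y0)); rewrite /aa unsplitK /=.
  have : (U_(rshift n y0) + c0)%MM \in msupp ('X_(rshift n y0) * 'X_[c0] - 'X_(rshift n y0) * w).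
    by rewrite mcoeff_msupp mcoeffB !mcoefXM hwc mcoeffX eqxx subr0 oner_neq0.
  move=> /(T1 hpart hy) /CbP /(_ n (leqnn n)); rewrite LD L_Uy Lc0 (lf_n lam) hn /=; lia.
have : (U_(lshift mm x0) + c0)%MM \in msupp ('X_(lshift mm x0) * w).
  by rewrite mcoeff_msupp mcoefXM.
move=> /hx' /CbP /(_ 0%N (leq0n _)); rewrite LD L_Ux Lc0 (lf_0 lam) (hmm0 hn hpos) /=; lia.
Qed.

End Final.

Local Close Scope ring_scope.

Theorem proposition2p18 (k : fieldType) (lam : seq nat)
  (hn : (0 < size lam)%N)
  (hpart : sorted geq lam)
  (hpos : all (fun a => 0 < a)%N lam)
  (t : nat) (ht : (2 <= t)%N) :
  depth_quot_eq (pow_ideal (@Ilam_gens k lam) t) 1.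
Proof.
case: t ht => [|t'] // ht.
have ht' : (1 <= t')%N by [].
split; first exact: (@part1 k lam hn hpart hpos t').
by apply: (@part2 k lam hn hpart hpos t').
Qed.
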